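(* Let $M$ be a smooth $n$-manifold with a torsion-free linear connection $\nabla$ and a symmetric $(0,2)$-tensor field $c$, and let $\widetilde{\nabla}$ be the linear connection on $T^{\ast}M$ given in the adapted frame by $\widetilde{\nabla}_{E_{\overline{i}}}E_{\overline{j}}=0$, $\widetilde{\nabla}_{E_{\overline{i}}}E_{j}=0$, $\widetilde{\nabla}_{E_{i}}E_{\overline{j}}=-\Gamma^{j}_{ih}E_{\overline{h}}$, $\widetilde{\nabla}_{E_{i}}E_{j}=\Gamma^{h}_{ij}E_{h}+\tfrac12(\nabla_i c_{jh}+\nabla_j c_{ih}-\nabla_h c_{ij})E_{\overline{h}}$. Then the curvature tensor $\widetilde R(X,Y)Z=\widetilde\nabla_X\widetilde\nabla_YZ-\widetilde\nabla_Y\widetilde\nabla_XZ-\widetilde\nabla_{[X,Y]}Z$ of $\widetilde\nabla$ satisfies $$\widetilde R(E_i,E_j)E_k=R_{ijk}^{\ \ \ h}E_h+\tfrac12\Big\{\nabla_i(\nabla_kc_{jh}-\nabla_hc_{jk})-\nabla_j(\nabla_kc_{ih}-\nabla_hc_{ik})-R_{ijk}^{\ \ \ m}c_{mh}-R_{ijh}^{\ \ \ m}c_{km}\Big\}E_{\overline h},$$ $$\widetilde R(E_i,E_j)E_{\overline k}=R_{jih}^{\ \ \ k}E_{\overline h},$$ and $\widetilde R(E_i,E_{\overline j})E_k=\widetilde R(E_i,E_{\overline j})E_{\overline k}=\widetilde R(E_{\overline i},E_j)E_k=\widetilde R(E_{\overline i},E_j)E_{\overline k}=\widetilde R(E_{\overline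 i},E_{\overline j})E_k=\widetilde R(E_{\overline i},E_{\overline j})E_{\overline k}=0$.
   Context: Summation convention; $\overline{i}=n+i$. $\Gamma^h_{ij}$ are the coefficients of $\nabla$ in local coordinates $(x^i)$; the curvature of $\nabla$ is $R(X,Y)=\nabla_X\nabla_Y-\nabla_Y\nabla_X-\nabla_{[X,Y]}$ with $R(\partial_i,\partial_j)\partial_k=R_{ijk}^{\ \ \ h}\partial_h$. $\nabla_ic_{jk}$ are the components of $\nabla c$ and $\nabla_i(\nabla_kc_{jh})$ those of $\nabla\nabla c$. On $T^{\ast}M$ use induced coordinates $(x^i,p_i)$, $\partial_{\overline i}=\partial/\partial p_i$, and the adapted frame $E_j=\partial_j+p_a\Gamma^a_{hj}\partial_{\overline h}$, $E_{\overline j}=\partial_{\overline j}$. *)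

(* Defs.v *)
(* Local-coordinate formalization: the chart domain is an open set U of R^n
   (points are row vectors 'rV[R]_n); T*U is the open set of points
   z : 'rV[R]_(n+n) with base x = lsubmx z in U and fibre p = rsubmx z.
   Index i of x^i is (lshift n i), index \bar i = n+i is (rshift n i). *)
From HB Require Import structures.
From mathcomp Require Import all_boot all_order all_algebra.
From mathcomp Require Import all_classical all_reals all_analysis.
Set Implicit Arguments. Unset Strict Implicit. Unset Printing Implicit Defensive.
Import Order.TTheory GRing.Theory Num.Theory.
Import numFieldNormedType.Exports.
Local Open Scope classical_set_scope.
Local Open Scope ring_scope.

Section Defs.
Variable R : realType.

Definition pd (m : nat) (i : 'I_m) (f : 'rV[R]_m -> R) (x : 'rV[R]_m) : R :=
  derive f x (delta_mx 0 i).

Fixpoint Ck (m k : nat) (U : set 'rV[R]_m) (f : 'rV[R]_m -> R) : Prop :=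
  match k with
  | 0 => forall x, U x -> {for x, continuous f}
  | k'.+1 => (forall x, U x -> differentiable f x) /\
             (forall i : 'I_m, Ck k' U (pd i f))
  end.
Definition smooth (m : nat) (U : set 'rV[R]_m) (f : 'rV[R]_m -> R) : Prop :=
  forall k, Ck k U f.

Definition vfield (m : nat) := 'rV[R]_m -> 'rV[R]_m.

Definition vder (m : nat) (X : vfield m) (f : 'rV[R]_m -> R) (x : 'rV[R]_m) : R :=
  \sum_(A < m) X x 0 A * pd A f x.

Definition lie (m : nat) (X Y : vfield m) : vfield m := fun x =>
  \row_(C < m) (vder X (fun y => Y y 0 C) x - vder Y (fun y => X y 0 C) x).

(* A frame is a matrix field F whose row a is the coordinate expression of E_a.
   A linear connection is given by its coefficients in the frame:
     nabla_{E_a} E_b = \sum_c Om a b c E_c. *)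
Definition frame_comp (m : nat) (F : 'rV[R]_m -> 'M[R]_m) (V : vfield m) :
  'rV[R]_m -> 'rV[R]_m := fun x => V x *m invmx (F x).

Definition cov (m : nat) (F : 'rV[R]_m -> 'M[R]_m)
    (Om : 'I_m -> 'I_m -> 'I_m -> 'rV[R]_m -> R) (X Y : vfield m) : vfield m :=
  fun x =>
    \sum_(b < m) vder X (fun y => frame_comp F Y y 0 b) x *: row b (F x)
  + \sum_(a < m) \sum_(b < m) \sum_(c < m)
      (frame_comp F X x 0 a * frame_comp F Y x 0 b * Om a b c x) *: row c (F x).

Definition curv (m : nat) (F : 'rV[R]_m -> 'M[R]_m)
    (Om : 'I_m -> 'I_m -> 'I_m -> 'rV[R]_m -> R) (X Y Z : vfield m) : vfield m :=
  fun x => cov F Om X (cov F Om Y Z) x - cov F Om Y (cov F Om X Z) x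
           - cov F Om (lie X Y) Z x.

(* ---- data on the base: Gam h i j = Gamma^h_{ij}, c i j = c_{ij} ---- *)

Definition dvec (n : nat) (i : 'I_n) : vfield n := fun _ => delta_mx 0 i.

(* R_{ijk}^h, defined by R(d_i,d_j)d_k = R_{ijk}^h d_h, where
   nabla_{d_i} d_j = Gamma^h_{ij} d_h *)
Definition Rcomp (n : nat) (Gam : 'I_n -> 'I_n -> 'I_n -> 'rV[R]_n -> R)
    (i j k h : 'I_n) (x : 'rV[R]_n) : R :=
  curv (fun _ => 1%:M) (fun a b c => Gam c a b) (dvec i) (dvec j) (dvec k) x 0 h.

Definition covc (n : nat) (Gam : 'I_n -> 'I_n -> 'I_n -> 'rV[R]_n -> R)
    (c : 'I_n -> 'I_n -> 'rV[R]_n -> R) (i j k : 'I_n) (x : 'rV[R]_n) : R :=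
  pd i (c j k) x - \sum_(m < n) (Gam m i j x * c m k x + Gam m i k x * c j m x).

Definition covcc (n : nat) (Gam : 'I_n -> 'I_n -> 'I_n -> 'rV[R]_n -> R)
    (c : 'I_n -> 'I_n -> 'rV[R]_n -> R) (i k j h : 'I_n) (x : 'rV[R]_n) : R :=
  pd i (covc Gam c k j h) x
  - \sum_(m < n) (Gam m i k x * covc Gam c m j h x
                  + Gam m i j x * covc Gam c k m h x
                  + Gam m i h x * covc Gam c k j m x).

(* adapted frame: E_j = d_j + p_a Gamma^a_{hj} d_{\bar h}, E_{\bar j} = d_{\bar j} *)
Definition adapted (n : nat) (Gam : 'I_n -> 'I_n -> 'I_n -> 'rV[R]_n -> R)
    (z : 'rV[R]_(n + n)) : 'M[R]_(n + n) :=
  block_mx 1%:M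
    (\matrix_(j < n, h < n) \sum_(a < n) rsubmx z 0 a * Gam a h j (lsubmx z))
    0 1%:M.

Definition Efield (n : nat) (Gam : 'I_n -> 'I_n -> 'I_n -> 'rV[R]_n -> R)
    (a : 'I_(n + n)) : vfield (n + n) := fun z => row a (adapted Gam z).

Definition Omt (n : nat) (Gam : 'I_n -> 'I_n -> 'I_n -> 'rV[R]_n -> R)
    (c : 'I_n -> 'I_n -> 'rV[R]_n -> R) (a b d : 'I_(n + n)) (z : 'rV[R]_(n + n)) : R :=
  let x := lsubmx z in
  match fintype.split a, fintype.split b, fintype.split d with
  | inr _, _, _ => 0
  | inl i, inr j, inr h => - Gam j i h x
  | inl _, inr _, inl _ => 0
  | inl i, inl j, inl h => Gam h i j x
  | inl i, inl j, inr h =>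
      2^-1 * (covc Gam c i j h x + covc Gam c j i h x - covc Gam c h i j x)
  end.

Definition Rt (n : nat) (Gam : 'I_n -> 'I_n -> 'I_n -> 'rV[R]_n -> R)
    (c : 'I_n -> 'I_n -> 'rV[R]_n -> R) (X Y Z : vfield (n + n)) : vfield (n + n) :=
  curv (adapted Gam) (Omt Gam c) X Y Z.

End Defs.

(* Main.v *)
Require Import Defs.
From HB Require Import structures.
From mathcomp Require Import all_boot all_order all_algebra.
From mathcomp Require Import all_classical all_reals all_analysis.
From mathcomp Require Import ring lra.
Import Order.TTheory GRing.Theory Num.Theory.
Import numFieldNormedType.Exports.
Local Open Scope classical_set_scope.
Local Open Scope ring_scope.
Set Implicit Arguments. Unset Strict Implicit.
Section Frame.
Variables (R : realType) (m : nat) (F : 'rV[R]_m -> 'M[R]_m)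
  (Om : 'I_m -> 'I_m -> 'I_m -> 'rV[R]_m -> R).
Hypothesis Funit : forall y, F y \in unitmx.

Definition fld (g : 'I_m -> 'rV[R]_m -> R) : vfield R m :=
  fun y => \sum_b g b y *: row b (F y).
Definition Ef (a : 'I_m) : vfield R m := fun y => row a (F y).

Lemma fld_mx g y : fld g y = (\row_b g b y) *m F y.
Proof. by rewrite mulmx_sum_row; apply: eq_bigr => b _; rewrite mxE. Qed.

Lemma frame_comp_fld g y : frame_comp F (fld g) y = \row_b g b y.
Proof. by rewrite /frame_comp fld_mx mulmxK. Qed.

Lemma frame_comp_Ef a y : frame_comp F (Ef a) y = delta_mx 0 a.
Proof. by rewrite /frame_comp /Ef rowE mulmxK. Qed.

Lemma deltaE (a b : 'I_m) : (delta_mx 0 a : 'rV[R]_m) 0 b = (b == a)%:R.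
Proof. by rewrite mxE eqxx. Qed.

Lemma vder_cst (X : vfield R m) (r : R) z : vder X (fun _ => r) z = 0.
Proof.
by rewrite /vder big1 // => A _; rewrite /pd derive_cst mulr0.
Qed.

Lemma cov_Ef_fld a g z : cov F Om (Ef a) (fld g) z =
  \sum_c (vder (Ef a) (g c) z + \sum_b g b z * Om a b c z) *: row c (F z).
Proof.
rewrite /cov.
have E1 : forall b, (fun y => frame_comp F (fld g) y 0 b) = g b.
  by move=> b; apply: funext => y; rewrite frame_comp_fld mxE.
under eq_bigr => b _ do rewrite E1.
rewrite [X in _ + X](bigD1 a) //=.
rewrite [X in _ + (_ + X)]big1 ?addr0; last first.
  move=> a' /negbTE na; apply: big1 => b _; apply: big1 => c _.
  by rewrite frame_comp_Ef deltaE na mul0r mul0r scale0r.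
rewrite exchange_big /= -big_split /=; apply: eq_bigr => c _.
rewrite scalerDl; congr (_ + _); rewrite scaler_suml; apply: eq_bigr => b _.
by rewrite frame_comp_Ef frame_comp_fld deltaE mxE eqxx mul1r.
Qed.

Lemma cov_any_Ef (X : vfield R m) k z : cov F Om X (Ef k) z =
  \sum_a \sum_c (frame_comp F X z 0 a * Om a k c z) *: row c (F z).
Proof.
rewrite /cov big1 ?add0r; last first.
  move=> b _; have -> : (fun y => frame_comp F (Ef k) y 0 b) = fun _ => (delta_mx 0 k : 'rV[R]_m) 0 b.
    by apply: funext => y; rewrite frame_comp_Ef.
  by rewrite vder_cst scale0r.
apply: eq_bigr => a _; rewrite (bigD1 k) //= [X in _ + X]big1 ?addr0.
  by apply: eq_bigr => c _; rewrite frame_comp_Ef deltaE eqxx mulr1.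
move=> b /negbTE nb; apply: big1 => c _.
by rewrite frame_comp_Ef deltaE nb mulr0 mul0r scale0r.
Qed.

Lemma cov_Ef_Ef b k : cov F Om (Ef b) (Ef k) = fld (Om b k).
Proof.
apply: funext => y; rewrite cov_any_Ef /fld (bigD1 b) //= [X in _ + X]big1 ?addr0.
  by apply: eq_bigr => c _; rewrite frame_comp_Ef deltaE eqxx mul1r.
move=> a /negbTE na; apply: big1 => c _.
by rewrite frame_comp_Ef deltaE na mul0r scale0r.
Qed.

Lemma curv_Ef a b k z : curv F Om (Ef a) (Ef b) (Ef k) z =
  \sum_d (vder (Ef a) (Om b k d) z - vder (Ef b) (Om a k d) z
     + \sum_c (Om b k c z * Om a c d z - Om a k c z * Om b c d z)) *: row d (F z)
  - \sum_a' \sum_c (frame_comp F (lie (Ef a) (Ef b)) z 0 a' * Om a' k c z) *: row c (F z).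
Proof.
rewrite /curv !cov_Ef_Ef !cov_Ef_fld cov_any_Ef; congr (_ - _).
rewrite -sumrB; apply: eq_bigr => d _.
rewrite -scalerBl; congr (_ *: _).
by rewrite sumrB opprD addrACA.
Qed.

End Frame.

Lemma deriveE_lsub (R : realType) (n : nat) (psi : 'rV[R]_n -> R)
   (z v : 'rV[R]_(n + n)) :
  derive (fun w => psi (lsubmx w)) z v = derive psi (lsubmx z) (lsubmx v).
Proof.
rewrite /derive.
have -> : (fun h : R => h^-1 *: (((fun w => psi (lsubmx w)) \o shift z) (h *: v) - psi (lsubmx z)))
  = (fun h : R => h^-1 *: ((psi \o shift (lsubmx z)) (h *: lsubmx v) - psi (lsubmx z))).
  apply: funext => h /=; congr (_ *: (psi _ - _)).
  by apply/matrixP => a b; rewrite !mxE.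
by [].
Qed.

Lemma lsub_delta_l (R : realType) (n : nat) (l : 'I_n) :
  lsubmx (delta_mx 0 (lshift n l) : 'rV[R]_(n + n)) = delta_mx 0 l.
Proof. by apply/matrixP => a b; rewrite !mxE eq_lshift. Qed.

Lemma lsub_delta_r (R : realType) (n : nat) (l : 'I_n) :
  lsubmx (delta_mx 0 (rshift n l) : 'rV[R]_(n + n)) = 0.
Proof. by apply/matrixP => a b; rewrite !mxE eq_lrshift andbF. Qed.

Lemma pd_lsub_l (R : realType) (n : nat) (psi : 'rV[R]_n -> R) l z :
  pd (lshift n l) (fun w : 'rV[R]_(n + n) => psi (lsubmx w)) z = pd l psi (lsubmx z).
Proof. by rewrite /pd deriveE_lsub lsub_delta_l. Qed.

Lemma pd_lsub_r (R : realType) (n : nat) (psi : 'rV[R]_n -> R) l z :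
  pd (rshift n l) (fun w : 'rV[R]_(n + n) => psi (lsubmx w)) z = 0.
Proof. by rewrite /pd deriveE_lsub lsub_delta_r derive0. Qed.

Lemma sum_row1 (R : realType) (n : nat) (g : 'I_n -> R) h :
  (\sum_d g d *: row d (1%:M : 'M[R]_n)) 0 h = g h.
Proof.
have -> : \sum_d g d *: row d (1%:M : 'M[R]_n) = (\row_d g d) *m 1%:M.
  by rewrite mulmx_sum_row; apply: eq_bigr => d _; rewrite mxE.
by rewrite mulmx1 mxE.
Qed.

Lemma Rcomp_formula (R : realType) (n : nat) (Gam : 'I_n -> 'I_n -> 'I_n -> 'rV[R]_n -> R)
  i j k h x : Rcomp Gam i j k h x =
  pd i (Gam h j k) x - pd j (Gam h i k) x
  + \sum_c (Gam c j k x * Gam h i c x - Gam c i k x * Gam h j c x).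
Proof.
have U1 : forall y : 'rV[R]_n, (fun _ => 1%:M : 'M[R]_n) y \in unitmx.
  by move=> y; exact: unitmx1.
have Ed : forall a, dvec a = Ef (fun _ => 1%:M : 'M[R]_n) a.
  by move=> a; apply: funext => y; rewrite /Ef row1.
have vd : forall a (f : 'rV[R]_n -> R), vder (Ef (fun _ => 1%:M : 'M[R]_n) a) f x = pd a f x.
  move=> a f; rewrite /vder (bigD1 a) //= big1 ?addr0.
    by rewrite /Ef row1 mxE !eqxx mul1r.
  by move=> A /negbTE nA; rewrite /Ef row1 mxE nA andbF mul0r.
rewrite /Rcomp !Ed curv_Ef //.
have -> : frame_comp (fun _ => 1%:M) (lie (Ef (fun _ => 1%:M : 'M[R]_n) i)
            (Ef (fun _ => 1%:M) j)) x = 0.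
  rewrite /frame_comp; have -> : lie (Ef (fun _ => 1%:M : 'M[R]_n) i) (Ef (fun _ => 1%:M) j) x = 0.
    apply/matrixP => a b; rewrite !mxE /Ef.
    have E1 : forall l, (fun y : 'rV[R]_n => row l (1%:M : 'M[R]_n) 0 b) = fun _ => (l == b)%:R.
      by move=> l; apply: funext => y; rewrite row1 mxE eqxx eq_sym.
    by rewrite !E1 !vder_cst subrr mxE.
  by rewrite mul0mx.
rewrite [X in _ - X]big1 ?subr0; last first.
  by move=> a _; apply: big1 => c _; rewrite mxE mul0r scale0r.
rewrite sum_row1 !vd; congr (_ + _); apply: eq_bigr => c _; congr (_ - _); exact: mulrC.
Qed.

Set Implicit Arguments. Unset Strict Implicit.

Section TU.
Variables (R : realType) (n : nat) (Gam : 'I_n -> 'I_n -> 'I_n -> 'rV[R]_n -> R)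
  (c : 'I_n -> 'I_n -> 'rV[R]_n -> R).

Lemma split_l (i : 'I_n) : fintype.split (lshift n i) = inl i.
Proof. exact: (unsplitK (inl i)). Qed.
Lemma split_r (i : 'I_n) : fintype.split (rshift n i) = inr i.
Proof. exact: (unsplitK (inr i)). Qed.

Lemma adapted_unit z : adapted Gam z \in unitmx.
Proof. by rewrite unitmxE /adapted det_ublock !det1 mulr1 unitr1. Qed.

Lemma adapted_ll z (i l : 'I_n) : adapted Gam z (lshift n i) (lshift n l) = (i == l)%:R.
Proof. by rewrite /adapted block_mxEul mxE. Qed.
Lemma adapted_rl z (i l : 'I_n) : adapted Gam z (rshift n i) (lshift n l) = 0.
Proof. by rewrite /adapted block_mxEdl mxE. Qed.

Lemma adapted_col_l z a (l : 'I_n) : adapted Gam z a (lshift n l) = (a == lshift n l)%:R.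
Proof.
case: (split_ordP a) => [i ->|j ->]; first by rewrite adapted_ll eq_lshift.
by rewrite adapted_rl eq_rlshift.
Qed.

Lemma vder_E_l (i : 'I_n) (psi : 'rV[R]_n -> R) z :
  vder (Efield Gam (lshift n i)) (fun w => psi (lsubmx w)) z = pd i psi (lsubmx z).
Proof.
rewrite /vder big_split_ord /= [X in _ + X]big1 ?addr0; last first.
  by move=> l _; rewrite pd_lsub_r mulr0.
rewrite (bigD1 i) //= [X in _ + X]big1 ?addr0.
  by rewrite /Efield mxE adapted_ll eqxx mul1r pd_lsub_l.
by move=> l /negbTE nl; rewrite /Efield mxE adapted_ll eq_sym nl mul0r.
Qed.

Lemma vder_E_r (j : 'I_n) (psi : 'rV[R]_n -> R) z :
  vder (Efield Gam (rshift n j)) (fun w => psi (lsubmx w)) z = 0.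
Proof.
rewrite /vder big_split_ord /= [X in _ + X]big1 ?addr0; last first.
  by move=> l _; rewrite pd_lsub_r mulr0.
by apply: big1 => l _; rewrite /Efield mxE adapted_rl mul0r.
Qed.

Lemma lie_frame_l a b z (l : 'I_n) :
  frame_comp (adapted Gam) (lie (Efield Gam a) (Efield Gam b)) z 0 (lshift n l) = 0.
Proof.
set u := frame_comp _ _ z.
have H : u *m adapted Gam z = lie (Efield Gam a) (Efield Gam b) z.
  by rewrite /u /frame_comp mulmxKV // adapted_unit.
clearbody u.
have E1 : forall e, (fun y => Efield Gam e y 0 (lshift n l)) = fun _ => (e == lshift n l)%:R.
  by move=> e; apply: funext => y; rewrite /Efield mxE adapted_col_l.
have := congr1 (fun M : 'rV[R]_(n + n) => M 0 (lshift n l)) H.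
rewrite /= /lie !mxE !E1 !vder_cst subrr.
rewrite (bigD1 (lshift n l)) //= adapted_col_l eqxx mulr1 big1 ?addr0 //.
by move=> A /negbTE nA; rewrite adapted_col_l nA mulr0.
Qed.

Lemma Rt_frame a b k z :
  Rt Gam c (Efield Gam a) (Efield Gam b) (Efield Gam k) z =
  \sum_d (vder (Efield Gam a) (Omt Gam c b k d) z - vder (Efield Gam b) (Omt Gam c a k d) z
     + \sum_e (Omt Gam c b k e z * Omt Gam c a e d z - Omt Gam c a k e z * Omt Gam c b e d z))
     *: row d (adapted Gam z).
Proof.
rewrite /Rt (@curv_Ef R (n + n) (adapted Gam) (Omt Gam c) (@adapted_unit)).
rewrite [X in _ - X]big1 ?subr0 // => a' _.
case: (split_ordP a') => [i ->|j ->].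
  by apply: big1 => e _; rewrite lie_frame_l mul0r scale0r.
by apply: big1 => e _; rewrite /Omt split_r mulr0 scale0r.
Qed.

End TU.

Set Implicit Arguments. Unset Strict Implicit.

Lemma line_is_derive (R : realType) n (f : 'rV[R]_n -> R) (a v : 'rV[R]_n) (s : R) :
  derivable f (a + s *: v) v ->
  is_derive s 1 (fun t : R => f (a + t *: v)) (derive f (a + s *: v) v).
Proof.
move=> df.
have E : (fun h : R => h^-1 *: (((fun t : R => f (a + t *: v)) \o shift s) (h *: 1)
            - f (a + s *: v)))
   = (fun h : R => h^-1 *: ((f \o shift (a + s *: v)) (h *: v) - f (a + s *: v))).
  apply: funext => h /=; congr (_ *: (f _ - _)).
  by rewrite [h *: 1]mulr1 scalerDl addrCA.
apply: DeriveDef; first by rewrite /derivable E.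
by rewrite /derive E.
Qed.

Lemma mixed (R : realType) n (f : 'rV[R]_n -> R) (y e1 e2 : 'rV[R]_n) (h : R) :
  0 < h ->
  (forall s t, 0 <= s <= h -> 0 <= t <= h ->
     differentiable f (y + s *: e1 + t *: e2) /\
     differentiable (fun w => derive f w e1) (y + s *: e1 + t *: e2)) ->
  exists s t, [/\ 0 <= s <= h, 0 <= t <= h &
   f (y + h *: e1 + h *: e2) - f (y + h *: e1) - f (y + h *: e2) + f y
     = h * h * derive (fun w => derive f w e1) (y + s *: e1 + t *: e2) e2].
Proof.
move=> h0 Hd.
set g1 := fun w => derive f w e1.
have P0 : forall s, y + s *: e1 = y + s *: e1 + 0 *: e2.
  by move=> s; rewrite scale0r addr0.
have PC : forall s t, y + t *: e2 + s *: e1 = y + s *: e1 + t *: e2.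
  by move=> s t; rewrite addrAC.
have hh : 0 <= h <= h.
  by apply/andP; split; lra.
have h00 : (0:R) <= 0 <= h by apply/andP; split; lra.
pose phi := (fun s : R => f (y + h *: e2 + s *: e1)) - (fun s : R => f (y + s *: e1)).
pose dphi := fun s => g1 (y + h *: e2 + s *: e1) - g1 (y + s *: e1).
have Dphi : forall s, 0 <= s <= h -> is_derive s 1 phi (dphi s).
  move=> s hs; apply: is_deriveB.
    apply: line_is_derive; apply: diff_derivable.
    by rewrite PC; case: (Hd s h hs hh).
  apply: line_is_derive; apply: diff_derivable.
  by rewrite P0; case: (Hd s 0 hs h00).
have itvW : forall s, s \in `]0, h[ -> 0 <= s <= h.
  by move=> s; rewrite in_itv /= => /andP[a b]; rewrite !ltW.
have Cphi : {within `[0, h], continuous phi}.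
  apply: derivable_within_continuous => s; rewrite in_itv /= => hs.
  by case: (Dphi s hs).
have [xi Hxi Eq1] := MVT h0 (fun s hs => Dphi s (itvW s hs)) Cphi.
have hxi := itvW xi Hxi.
pose psi := fun t : R => g1 (y + xi *: e1 + t *: e2).
pose dpsi := fun t : R => derive g1 (y + xi *: e1 + t *: e2) e2.
have Dpsi : forall t, 0 <= t <= h -> is_derive t 1 psi (dpsi t).
  move=> t ht; apply: line_is_derive; apply: diff_derivable.
  by case: (Hd xi t hxi ht).
have Cpsi : {within `[0, h], continuous psi}.
  apply: derivable_within_continuous => s; rewrite in_itv /= => hs.
  by case: (Dpsi s hs).
have [eta Heta Eq2] := MVT h0 (fun s hs => Dpsi s (itvW s hs)) Cpsi.
exists xi, eta; split => //; first exact: itvW.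
have E1 : dphi xi = psi h - psi 0 by rewrite /dphi /psi PC -P0.
have Ephi : phi h - phi 0 = (f (y + h *: e1 + h *: e2) - f (y + h *: e1))
    - (f (y + h *: e2) - f y).
  apply: (@etrans _ _ (f (y + h *: e2 + h *: e1) - f (y + h *: e1)
     - (f (y + h *: e2 + 0 *: e1) - f (y + 0 *: e1)))); first by [].
  by rewrite !scale0r !addr0 PC.
move: Eq1 Eq2; rewrite Ephi E1 subr0 => Eq1 Eq2; rewrite Eq2 in Eq1.
transitivity (f (y + h *: e1 + h *: e2) - f (y + h *: e1) - (f (y + h *: e2) - f y)).
  by ring.
by rewrite Eq1 /dpsi; ring.
Qed.

Lemma half_pos (R : realType) (d : R) : 0 < d -> 0 < d / 2.
Proof. move=> ?; lra. Qed.
Lemma half_contra (R : realType) (d : R) : d < d / 2 + d / 2 -> False.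
Proof. move=> ?; lra. Qed.

Lemma small_bound (R : realType) (s t nu nw r : R) :
  0 < r -> 0 <= nu -> 0 <= nw -> 0 <= s <= r / (nu + nw + 1) ->
  0 <= t <= r / (nu + nw + 1) -> s * nu + t * nw < r.
Proof.
move=> r0 nu0 nw0 /andP[s0 sH] /andP[t0 tH].
have M0 : 0 < nu + nw + 1 by lra.
have HM : r / (nu + nw + 1) * (nu + nw + 1) = r by rewrite divfK // gt_eqF.
set H := r / (nu + nw + 1) in sH tH HM.
have H0 : 0 < H by rewrite /H divr_gt0.
have e1 : s * nu <= H * nu by rewrite ler_wpM2r.
have e2 : t * nw <= H * nw by rewrite ler_wpM2r.
have e3 : H * (nu + nw + 1) = H * nu + H * nw + H by ring.
lra.
Qed.

Lemma small_in_ball (R : realType) n (x u w : 'rV[R]_n) (r s t : R) : 0 < r ->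
  0 <= s <= r / (`|u| + `|w| + 1) -> 0 <= t <= r / (`|u| + `|w| + 1) ->
  ball x r (x + s *: u + t *: w).
Proof.
move=> r0 hs ht; rewrite -ball_normE /=.
rewrite -addrA opprD addrA subrr sub0r normrN.
apply: le_lt_trans (ler_normD _ _) _.
rewrite !normrZ.
move: (hs) (ht) => /andP[s0 _] /andP[t0 _].
rewrite (ger0_norm s0) (ger0_norm t0).
by apply: small_bound => //; exact: normr_ge0.
Qed.

Lemma pos3 (R : realType) (p q : R) : 0 <= p -> 0 <= q -> 0 < p + q + 1.
Proof. move=> ? ?; lra. Qed.

Lemma clairaut (R : realType) n (U : set 'rV[R]_n) (f : 'rV[R]_n -> R)
  (x : 'rV[R]_n) (i j : 'I_n) :
  open U -> U x -> (forall y, U y -> differentiable f y) ->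
  (forall l y, U y -> differentiable (pd l f) y) ->
  {for x, continuous (pd j (pd i f))} -> {for x, continuous (pd i (pd j f))} ->
  pd j (pd i f) x = pd i (pd j f) x.
Proof.
move=> oU Ux df dpf c1 c2.
have [a Ea] : exists a, pd j (pd i f) x = a by eexists.
have [b Eb] : exists b, pd i (pd j f) x = b by eexists.
rewrite Ea Eb.
suff H : forall e : R, 0 < e -> `|a - b| < e + e.
  case: (eqVneq a b) => [//|neq].
  have p : 0 < `|a - b| by rewrite normr_gt0 subr_eq0.
  by case: (half_contra (H _ (half_pos p))).
move=> e e0.
have N1 : nbhs x U by apply: open_nbhs_nbhs; split.
have N2 : \forall t \near x, `|a - pd j (pd i f) t| < e.
  by rewrite -Ea; move/cvgrPdist_lt: c1; apply.
have N3 : \forall t \near x, `|b - pd i (pd j f) t| < e.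
  by rewrite -Eb; move/cvgrPdist_lt: c2; apply.
have N : nbhs x (U `&` ((fun t => `|a - pd j (pd i f) t| < e) `&`
     (fun t => `|b - pd i (pd j f) t| < e))).
  apply: filterI; first exact: N1.
  apply: filterI; [exact: N2 | exact: N3].
have [r r0 Hr] := (nbhs_ballP x _).1 N.
have r0' : 0 < r by exact: r0.
pose ei : 'rV[R]_n := delta_mx 0 i.
pose ej : 'rV[R]_n := delta_mx 0 j.
pose h := r / (`|ei| + `|ej| + 1).
have h0 : 0 < h.
  rewrite /h; apply: divr_gt0; first exact: r0'.
  by apply: pos3; exact: normr_ge0.
have inU : forall (u w : 'rV[R]_n) s t, `|u| + `|w| = `|ei| + `|ej| ->
   0 <= s <= h -> 0 <= t <= h ->
   [/\ U (x + s *: u + t *: w), `|a - pd j (pd i f) (x + s *: u + t *: w)| < e &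
       `|b - pd i (pd j f) (x + s *: u + t *: w)| < e].
  move=> u w s t Euw hs ht.
  have : ball x r (x + s *: u + t *: w).
    by apply: small_in_ball => //; rewrite Euw.
  by move/Hr => [p1 [p2 p3]].
have [s1 [t1 [hs1 ht1 D1]]] := @mixed R n f x ei ej h h0
  (fun s t hs ht => let: And3 Up _ _ := inU ei ej s t erefl hs ht in conj (df _ Up) (dpf i _ Up)).
have [s2 [t2 [hs2 ht2 D2]]] := @mixed R n f x ej ei h h0
  (fun s t hs ht => let: And3 Up _ _ := inU ej ei s t (addrC _ _) hs ht in conj (df _ Up) (dpf j _ Up)).
have Eq : pd j (pd i f) (x + s1 *: ei + t1 *: ej) = pd i (pd j f) (x + s2 *: ej + t2 *: ei).
  apply: (mulfI (mulf_neq0 (lt0r_neq0 h0) (lt0r_neq0 h0))).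
  rewrite -[LHS]D1 -[RHS]D2.
  have P : x + h *: ej + h *: ei = x + h *: ei + h *: ej by rewrite addrAC.
  by rewrite P; ring.
have [_ A1 _] := inU ei ej s1 t1 erefl hs1 ht1.
have [_ _ A2] := inU ej ei s2 t2 (addrC _ _) hs2 ht2.
rewrite Eq in A1.
have -> : a - b = (a - pd i (pd j f) (x + s2 *: ej + t2 *: ei))
   - (b - pd i (pd j f) (x + s2 *: ej + t2 *: ei)) by ring.
apply: le_lt_trans (ler_normB _ _) _.
exact: ltrD.
Qed.

Set Implicit Arguments. Unset Strict Implicit.

Section Cov.
Variables (R : realType) (n : nat) (Gam : 'I_n -> 'I_n -> 'I_n -> 'rV[R]_n -> R)
  (c : 'I_n -> 'I_n -> 'rV[R]_n -> R) (x : 'rV[R]_n).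

Lemma covc_fun a b d : covc Gam c a b d =
  pd a (c b d) - \sum_m (Gam m a b * c m d + Gam m a d * c b m).
Proof.
apply: funext => y; rewrite /covc fct_sumE.
by rewrite [RHS]/GRing.add /=.
Qed.

Hypothesis dG : forall m a b l, derivable (Gam m a b) x (delta_mx 0 l).
Hypothesis dc : forall a b l, derivable (c a b) x (delta_mx 0 l).
Hypothesis ddc : forall a b e l, derivable (pd a (c b e)) x (delta_mx 0 l).

Lemma derivable_covc a b d l : derivable (covc Gam c a b d) x (delta_mx 0 l).
Proof.
rewrite covc_fun; apply: derivableB; first exact: ddc.
apply: derivable_sum => m; apply: derivableD; exact: derivableM.
Qed.

Lemma pd_covc l a b e : pd l (covc Gam c a b e) x =
  pd l (pd a (c b e)) x - \sum_m pd l (Gam m a b) x * c m e x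
  - \sum_m Gam m a b x * pd l (c m e) x - \sum_m pd l (Gam m a e) x * c b m x
  - \sum_m Gam m a e x * pd l (c b m) x.
Proof.
rewrite /pd covc_fun deriveB; last 2 first.
- exact: ddc.
- by apply: derivable_sum => m; apply: derivableD; exact: derivableM.
rewrite derive_sum; last by move=> m; apply: derivableD; exact: derivableM.
rewrite -!addrA; congr (_ + _); rewrite -!sumrN -!big_split /=.
apply: eq_bigr => m _.
rewrite deriveD ?deriveM //; try exact: derivableM.
have sc : forall u v : R, u *: v = u * v by [].
by rewrite !sc; ring.
Qed.

Lemma pd_A l a b d :
  pd l (fun y => 2^-1 * (covc Gam c a b d y + covc Gam c b a d y - covc Gam c d a b y)) x
  = 2^-1 * (pd l (covc Gam c a b d) x + pd l (covc Gam c b a d) x - pd l (covc Gam c d a b) x).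
Proof.
have -> : (fun y => 2^-1 * (covc Gam c a b d y + covc Gam c b a d y - covc Gam c d a b y))
   = 2^-1 \*o (covc Gam c a b d + covc Gam c b a d - covc Gam c d a b) by [].
rewrite /pd deriveMl; last by apply: derivableB; [apply: derivableD|]; exact: derivable_covc.
rewrite deriveB; last 2 first.
- by apply: derivableD; exact: derivable_covc.
- exact: derivable_covc.
by rewrite deriveD //; exact: derivable_covc.
Qed.

Lemma sumGC (g : 'I_n -> R) (a b d : 'I_n -> 'I_n) :
  \sum_m g m * covc Gam c (a m) (b m) (d m) x =
  \sum_m g m * pd (a m) (c (b m) (d m)) x
  - \sum_m \sum_s g m * Gam s (a m) (b m) x * c s (d m) x
  - \sum_m \sum_s g m * Gam s (a m) (d m) x * c (b m) s x.
Proof.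
rewrite -!sumrB; apply: eq_bigr => m _.
rewrite /covc mulrBr mulr_sumr -!addrA; congr (_ + _).
rewrite -!sumrN -big_split /=; apply: eq_bigr => s _; ring.
Qed.

Lemma sumRc i j k (g : 'I_n -> R) :
  \sum_m Rcomp Gam i j k m x * g m =
  \sum_m pd i (Gam m j k) x * g m - \sum_m pd j (Gam m i k) x * g m
  + \sum_m \sum_s Gam s j k x * Gam m i s x * g m
  - \sum_m \sum_s Gam s i k x * Gam m j s x * g m.
Proof.
rewrite -sumrB -big_split -sumrB /=; apply: eq_bigr => m _.
rewrite Rcomp_formula mulrDl mulr_suml -!addrA -sumrB mulrBl -addrA; congr (_ + (_ + _)).
by apply: eq_bigr => s _; ring.
Qed.

End Cov.



Set Implicit Arguments. Unset Strict Implicit.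

Section Ricci.
Variables (R : realType) (n : nat) (Gam : 'I_n -> 'I_n -> 'I_n -> 'rV[R]_n -> R)
  (c : 'I_n -> 'I_n -> 'rV[R]_n -> R) (x : 'rV[R]_n).
Hypothesis dG : forall m a b l, derivable (Gam m a b) x (delta_mx 0 l).
Hypothesis dc : forall a b l, derivable (c a b) x (delta_mx 0 l).
Hypothesis ddc : forall a b e l, derivable (pd a (c b e)) x (delta_mx 0 l).
Hypothesis Gsym : forall m a b, Gam m a b x = Gam m b a x.
Hypothesis clair : forall a b e l, pd l (pd a (c b e)) x = pd a (pd l (c b e)) x.

Lemma ricci i j k h :
  - \sum_m Rcomp Gam i j k m x * c m h x - \sum_m Rcomp Gam i j h m x * c k m x
  = covcc Gam c i j k h x - covcc Gam c j i k h x.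
Proof.
rewrite (sumRc Gam x i j k (fun m => c m h x)) (sumRc Gam x i j h (fun m => c k m x)).
rewrite /covcc !(pd_covc dG dc ddc) !big_split /=.
have e1 : \sum_m Gam m j i x * covc Gam c m k h x = \sum_m Gam m i j x * covc Gam c m k h x.
  by apply: eq_bigr => m _; rewrite Gsym.
rewrite e1.
rewrite (sumGC Gam c x (fun m => Gam m i k x) (fun _ => j) (fun m => m) (fun _ => h)).
rewrite (sumGC Gam c x (fun m => Gam m i h x) (fun _ => j) (fun _ => k) (fun m => m)).
rewrite (sumGC Gam c x (fun m => Gam m j k x) (fun _ => i) (fun m => m) (fun _ => h)).
rewrite (sumGC Gam c x (fun m => Gam m j h x) (fun _ => i) (fun _ => k) (fun m => m)).
rewrite /=.
have X1 : \sum_m \sum_s Gam m i k x * Gam s j m x * c s h x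
        = \sum_m \sum_s Gam s i k x * Gam m j s x * c m h x by exact: exchange_big.
have X2 : \sum_m \sum_s Gam m i h x * Gam s j m x * c k s x
        = \sum_m \sum_s Gam s i h x * Gam m j s x * c k m x by exact: exchange_big.
have X3 : \sum_m \sum_s Gam m j k x * Gam s i m x * c s h x
        = \sum_m \sum_s Gam s j k x * Gam m i s x * c m h x by exact: exchange_big.
have X4 : \sum_m \sum_s Gam m j h x * Gam s i m x * c k s x
        = \sum_m \sum_s Gam s j h x * Gam m i s x * c k m x by exact: exchange_big.
have X5 : \sum_m \sum_s Gam m i h x * Gam s j k x * c s m x
        = \sum_m \sum_s Gam m j k x * Gam s i h x * c m s x.
  by rewrite exchange_big; apply: eq_bigr => m _; apply: eq_bigr => s _; ring.
have X6 : \sum_m \sum_s Gam m j h x * Gam s i k x * c s m x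
        = \sum_m \sum_s Gam m i k x * Gam s j h x * c m s x.
  by rewrite exchange_big; apply: eq_bigr => m _; apply: eq_bigr => s _; ring.
rewrite X1 X2 X3 X4 X5 X6 (clair j k h i).
ring.
Qed.

Lemma key i j k h :
  pd i (fun y => 2^-1 * (covc Gam c j k h y + covc Gam c k j h y - covc Gam c h j k y)) x
  - pd j (fun y => 2^-1 * (covc Gam c i k h y + covc Gam c k i h y - covc Gam c h i k y)) x
  + (\sum_s (Gam s j k x * (2^-1 * (covc Gam c i s h x + covc Gam c s i h x - covc Gam c h i s x))
           - Gam s i k x * (2^-1 * (covc Gam c j s h x + covc Gam c s j h x - covc Gam c h j s x)))
   + \sum_s ((2^-1 * (covc Gam c j k s x + covc Gam c k j s x - covc Gam c s j k x)) * - Gam s i h x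
           - (2^-1 * (covc Gam c i k s x + covc Gam c k i s x - covc Gam c s i k x)) * - Gam s j h x))
  = 2^-1 * (covcc Gam c i k j h x - covcc Gam c i h j k x
            - (covcc Gam c j k i h x - covcc Gam c j h i k x)
            - \sum_m Rcomp Gam i j k m x * c m h x
            - \sum_m Rcomp Gam i j h m x * c k m x).
Proof.
have R3 := ricci i j k h.
have R3' : \sum_m Rcomp Gam i j k m x * c m h x =
   - \sum_m Rcomp Gam i j h m x * c k m x - (covcc Gam c i j k h x - covcc Gam c j i k h x).
  by rewrite -R3; ring.
rewrite R3' !(pd_A dG dc ddc).
set C := fun a b d => covc Gam c a b d x.
have LS : \sum_s (Gam s j k x * (2^-1 * (covc Gam c i s h x + covc Gam c s i h x - covc Gam c h i s x))
           - Gam s i k x * (2^-1 * (covc Gam c j s h x + covc Gam c s j h x - covc Gam c h j s x)))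
   + \sum_s ((2^-1 * (covc Gam c j k s x + covc Gam c k j s x - covc Gam c s j k x)) * - Gam s i h x
           - (2^-1 * (covc Gam c i k s x + covc Gam c k i s x - covc Gam c s i k x)) * - Gam s j h x)
  = 2^-1 * \sum_s (Gam s j k x * covc Gam c i s h x + Gam s j k x * covc Gam c s i h x
      - Gam s j k x * covc Gam c h i s x - Gam s i k x * covc Gam c j s h x
      - Gam s i k x * covc Gam c s j h x + Gam s i k x * covc Gam c h j s x
      - Gam s i h x * covc Gam c j k s x - Gam s i h x * covc Gam c k j s x
      + Gam s i h x * covc Gam c s j k x + Gam s j h x * covc Gam c i k s x
      + Gam s j h x * covc Gam c k i s x - Gam s j h x * covc Gam c s i k x).
  by rewrite -big_split /= mulr_sumr; apply: eq_bigr => s _; ring.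
rewrite LS /covcc.
have e1 : forall F : 'I_n -> R, \sum_m Gam m j i x * F m = \sum_m Gam m i j x * F m.
  by move=> F; apply: eq_bigr => m _; rewrite Gsym.
rewrite !(big_split, sumrN) /=.
rewrite (e1 (fun m => covc Gam c k m h x)) (e1 (fun m => covc Gam c h m k x))
  (e1 (fun m => covc Gam c m k h x)).
ring.
Qed.
End Ricci.

Set Implicit Arguments. Unset Strict Implicit.

Section TU2.
Variables (R : realType) (n : nat) (Gam : 'I_n -> 'I_n -> 'I_n -> 'rV[R]_n -> R)
  (c : 'I_n -> 'I_n -> 'rV[R]_n -> R).

Definition OmB (a b d : 'I_(n + n)) (x : 'rV[R]_n) : R :=
  match fintype.split a, fintype.split b, fintype.split d with
  | inr _, _, _ => 0
  | inl i, inr j, inr h => - Gam j i h x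
  | inl _, inr _, inl _ => 0
  | inl i, inl j, inl h => Gam h i j x
  | inl i, inl j, inr h =>
      2^-1 * (covc Gam c i j h x + covc Gam c j i h x - covc Gam c h i j x)
  end.

Lemma Omt_B a b d : Omt Gam c a b d = fun w => OmB a b d (lsubmx w).
Proof. by []. Qed.

Lemma Rt_frameB a b k z :
  Rt Gam c (Efield Gam a) (Efield Gam b) (Efield Gam k) z =
  \sum_d (vder (Efield Gam a) (fun w => OmB b k d (lsubmx w)) z
          - vder (Efield Gam b) (fun w => OmB a k d (lsubmx w)) z
     + \sum_e (OmB b k e (lsubmx z) * OmB a e d (lsubmx z)
               - OmB a k e (lsubmx z) * OmB b e d (lsubmx z)))
     *: row d (adapted Gam z).
Proof. by rewrite Rt_frame. Qed.

Lemma pdN (f : 'rV[R]_n -> R) l x : derivable f x (delta_mx 0 l) ->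
  pd l (fun y => - f y) x = - pd l f x.
Proof. move=> df; rewrite /pd -deriveN //. Qed.

Lemma id2 i j k z (dG : forall h a b (l : 'I_n), derivable (Gam h a b) (lsubmx z) (delta_mx 0 l)) :
  Rt Gam c (Efield Gam (lshift n i)) (Efield Gam (lshift n j)) (Efield Gam (rshift n k)) z =
       \sum_(h < n) Rcomp Gam j i h k (lsubmx z) *: Efield Gam (rshift n h) z.
Proof.
rewrite Rt_frameB big_split_ord /= [X in X + _]big1 ?add0r; last first.
  move=> h _; rewrite !vder_E_l big_split_ord /= !big1 ?addr0.
  - by rewrite /OmB !split_l !split_r /= /pd !derive_cst subrr scale0r.
  - by move=> s _; rewrite /OmB !split_l !split_r /= !mulr0 subrr.
  - by move=> s _; rewrite /OmB !split_l !split_r /= !mul0r subrr.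
apply: eq_bigr => h _; congr (_ *: _).
rewrite !vder_E_l Rcomp_formula big_split_ord /= big1 ?add0r; last first.
  by move=> s _; rewrite /OmB !split_l !split_r /= !mul0r subrr.
rewrite /OmB !split_l !split_r /= !pdN //; congr (_ + _).
  by rewrite opprK addrC.
by apply: eq_bigr => s _; rewrite !split_r /= !mulrNN [X in X - _]mulrC [X in _ - X]mulrC.
Qed.
Lemma idz_r i b k z :
  Rt Gam c (Efield Gam (rshift n i)) (Efield Gam b) (Efield Gam k) z = 0.
Proof.
rewrite Rt_frameB big1 // => d _; rewrite vder_E_r.
have -> : (fun w : 'rV[R]_(n + n) => OmB (rshift n i) k d (lsubmx w)) = fun _ => 0.
  by apply: funext => w; rewrite /OmB split_r.
rewrite vder_cst subrr add0r big1 ?scale0r // => e _.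
by rewrite {2 3}/OmB split_r /= mulr0 mul0r subrr.
Qed.

Lemma idz_lr i j k z :
  Rt Gam c (Efield Gam (lshift n i)) (Efield Gam (rshift n j)) (Efield Gam k) z = 0.
Proof.
rewrite Rt_frameB big1 // => d _; rewrite vder_E_r.
have -> : (fun w : 'rV[R]_(n + n) => OmB (rshift n j) k d (lsubmx w)) = fun _ => 0.
  by apply: funext => w; rewrite /OmB split_r.
rewrite vder_cst subrr add0r big1 ?scale0r // => e _.
by rewrite {1 4}/OmB split_r /= mulr0 mul0r subrr.
Qed.

Lemma id1_l i j k z h :
  vder (Efield Gam (lshift n i)) (fun w => OmB (lshift n j) (lshift n k) (lshift n h) (lsubmx w)) z
  - vder (Efield Gam (lshift n j)) (fun w => OmB (lshift n i) (lshift n k) (lshift n h) (lsubmx w)) z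
  + \sum_e (OmB (lshift n j) (lshift n k) e (lsubmx z) * OmB (lshift n i) e (lshift n h) (lsubmx z)
      - OmB (lshift n i) (lshift n k) e (lsubmx z) * OmB (lshift n j) e (lshift n h) (lsubmx z))
  = Rcomp Gam i j k h (lsubmx z).
Proof.
rewrite !vder_E_l Rcomp_formula big_split_ord /= [X in _ + (_ + X)]big1 ?addr0; last first.
  by move=> s _; rewrite /OmB !split_l !split_r /= !mulr0 subrr.
rewrite /OmB !split_l /=; congr (_ + _).
by apply: eq_bigr => s _; rewrite !split_l /= [X in X - _]mulrC [X in _ - X]mulrC.
Qed.

Lemma id1_r i j k z h
  (dG : forall m a b l, derivable (Gam m a b) (lsubmx z) (delta_mx 0 l))
  (dc : forall a b l, derivable (c a b) (lsubmx z) (delta_mx 0 l))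
  (ddc : forall a b e l, derivable (pd a (c b e)) (lsubmx z) (delta_mx 0 l))
  (Gsym : forall m a b, Gam m a b (lsubmx z) = Gam m b a (lsubmx z))
  (clair : forall a b e l, pd l (pd a (c b e)) (lsubmx z) = pd a (pd l (c b e)) (lsubmx z)) :
  vder (Efield Gam (lshift n i)) (fun w => OmB (lshift n j) (lshift n k) (rshift n h) (lsubmx w)) z
  - vder (Efield Gam (lshift n j)) (fun w => OmB (lshift n i) (lshift n k) (rshift n h) (lsubmx w)) z
  + \sum_e (OmB (lshift n j) (lshift n k) e (lsubmx z) * OmB (lshift n i) e (rshift n h) (lsubmx z)
      - OmB (lshift n i) (lshift n k) e (lsubmx z) * OmB (lshift n j) e (rshift n h) (lsubmx z))
  = 2^-1 * (covcc Gam c i k j h (lsubmx z) - covcc Gam c i h j k (lsubmx z)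
            - (covcc Gam c j k i h (lsubmx z) - covcc Gam c j h i k (lsubmx z))
            - \sum_m Rcomp Gam i j k m (lsubmx z) * c m h (lsubmx z)
            - \sum_m Rcomp Gam i j h m (lsubmx z) * c k m (lsubmx z)).
Proof.
rewrite !vder_E_l big_split_ord /=.
rewrite /OmB !split_l !split_r /=.
under eq_bigr => s _ do rewrite !split_l /=.
under [X in _ + (_ + X)]eq_bigr => s _ do rewrite !split_r /=.
exact: key.
Qed.
End TU2.

Unset Implicit Arguments.
Set Strict Implicit.

Theorem proposition4 (R : realType) (n : nat) (U : set 'rV[R]_n)
    (Gam : 'I_n -> 'I_n -> 'I_n -> 'rV[R]_n -> R)
    (c : 'I_n -> 'I_n -> 'rV[R]_n -> R) :
  open U ->
  (forall h i j, smooth U (Gam h i j)) ->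
  (forall i j, smooth U (c i j)) ->
  (forall h i j x, U x -> Gam h i j x = Gam h j i x) ->
  (forall i j x, U x -> c i j x = c j i x) ->
  forall z : 'rV[R]_(n + n), U (lsubmx z) ->
  let x := lsubmx z in
  let E := Efield Gam in
  let Rt := Rt Gam c in
  (forall i j k : 'I_n,
     Rt (E (lshift n i)) (E (lshift n j)) (E (lshift n k)) z =
       \sum_(h < n) Rcomp Gam i j k h x *: E (lshift n h) z
     + \sum_(h < n)
         (2^-1 * (covcc Gam c i k j h x - covcc Gam c i h j k x
                  - (covcc Gam c j k i h x - covcc Gam c j h i k x)
                  - \sum_(m < n) Rcomp Gam i j k m x * c m h x
                  - \sum_(m < n) Rcomp Gam i j h m x * c k m x))
           *: E (rshift n h) z) /\
  (forall i j k : 'I_n,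
     Rt (E (lshift n i)) (E (lshift n j)) (E (rshift n k)) z =
       \sum_(h < n) Rcomp Gam j i h k x *: E (rshift n h) z) /\
  (forall i j k : 'I_n,
     (Rt (E (lshift n i)) (E (rshift n j)) (E (lshift n k)) z = 0 /\
         Rt (E (lshift n i)) (E (rshift n j)) (E (rshift n k)) z = 0 /\
         Rt (E (rshift n i)) (E (lshift n j)) (E (lshift n k)) z = 0 /\
         Rt (E (rshift n i)) (E (lshift n j)) (E (rshift n k)) z = 0 /\
         Rt (E (rshift n i)) (E (rshift n j)) (E (lshift n k)) z = 0 /\
         Rt (E (rshift n i)) (E (rshift n j)) (E (rshift n k)) z = 0)).
Proof.
move=> oU sG sc Gs cs z Uz x E Rt0.
rewrite /x /E /Rt0 {x E Rt0}.
have dG : forall m a b l, derivable (Gam m a b) (lsubmx z) (delta_mx 0 l).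
  by move=> m a b l; apply: diff_derivable; exact: (sG m a b 1%N).1.
have dc : forall a b l, derivable (c a b) (lsubmx z) (delta_mx 0 l).
  by move=> a b l; apply: diff_derivable; exact: (sc a b 1%N).1.
have ddc : forall a b e l, derivable (pd a (c b e)) (lsubmx z) (delta_mx 0 l).
  by move=> a b e l; apply: diff_derivable; exact: ((sc b e 2%N).2 a).1.
have Gsym : forall m a b, Gam m a b (lsubmx z) = Gam m b a (lsubmx z).
  by move=> m a b; exact: Gs.
have clair : forall a b e l, pd l (pd a (c b e)) (lsubmx z) = pd a (pd l (c b e)) (lsubmx z).
  move=> a b e l; apply: (clairaut oU Uz).
  - exact: (sc b e 1%N).1.
  - by move=> l' y Uy; exact: (((sc b e 2%N).2 l').1 y Uy).
  - apply: differentiable_continuous; exact: ((((sc b e 3%N).2 a).2 l).1 _ Uz).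
  - apply: differentiable_continuous; exact: ((((sc b e 3%N).2 l).2 a).1 _ Uz).
split; [|split].
- move=> i j k; rewrite Rt_frameB big_split_ord /=; congr (_ + _).
    by apply: eq_bigr => h _; congr (_ *: _); exact: id1_l.
  by apply: eq_bigr => h _; congr (_ *: _); exact: id1_r.
- by move=> i j k; exact: id2.
- by move=> i j k; rewrite !idz_lr !idz_r.
Qed.
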